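(* If $A\subset\mathbb{R}^d$ is a finite set in general position, then for all $k\in\mathbb{N}$, $\dim(\mathrm{Del}_{\infty,k})\le\binom{d+1}{\lfloor\frac{d+1}{2}\rfloor}$.
   Context: For $\tilde A\subseteq A$ with $|\tilde A|=k$, the order-$k$ Voronoi region is $\mathrm{Vor}(\tilde A)=\{b\in\mathbb{R}^d: \|b-\tilde a\|\le\|b-a\|\ \forall\tilde a\in\tilde A, a\in A\setminus\tilde A\}$, and $\mathrm{Ball}_r(\tilde A)=\{b: \|b-\tilde a\|\le r\ \forall\tilde a\in\tilde A\}$. The order-$k$ Delaunay complex $\mathrm{Del}_{r,k}$ is the nerve of $\{\mathrm{Ball}_r(\tilde A)\cap\mathrm{Vor}(\tilde A): |\tilde A|=k\}$, i.e. the simplicial complex whose simplices are sets of $k$-subsets $\tilde A$ whose sets $\mathrm{Ball}_r(\tilde A)\cap\mathrm{Vor}(\tilde A)$ have nonempty common intersection. $\mathrm{Del}_{\infty,k}$ denotes the largest of the complexes $\mathrm{Del}_{r,k}$, $r\ge0$ (equivalently, the nerve of the order-$k$ Voronoi regions). *)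

(* Defs.v *)
From HB Require Import structures.
From mathcomp Require Import all_boot all_order all_algebra.
From mathcomp Require Import finmap.
From mathcomp Require Import reals.
Set Implicit Arguments. Unset Strict Implicit. Unset Printing Implicit Defensive.
Import Order.TTheory GRing.Theory Num.Theory.
Local Open Scope ring_scope.
Local Open Scope fset_scope.

Section Defs.
Variables (R : realType) (d : nat).
Notation pt := 'rV[R]_d.

Definition enorm (x : pt) : R := Num.sqrt (\sum_(i < d) (x 0 i) ^+ 2).
Definition dotp (u x : pt) : R := \sum_(i < d) u 0 i * x 0 i.

Definition Vor (A At : {fset pt}) : pt -> Prop :=
  fun b => forall at_ a, at_ \in At -> a \in A -> a \notin At ->
    enorm (b - at_) <= enorm (b - a).

Definition Ball (r : R) (At : {fset pt}) : pt -> Prop :=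
  fun b => forall at_, at_ \in At -> enorm (b - at_) <= r.

Definition Del (A : {fset pt}) (r : R) (k : nat) (sigma : {fset {fset pt}}) : Prop :=
  sigma != fset0 /\
  (forall At, At \in sigma -> At `<=` A /\ #|` At| = k) /\
  exists b : pt, forall At, At \in sigma -> Ball r At b /\ Vor A At b.

Definition Del_inf (A : {fset pt}) (k : nat) (sigma : {fset {fset pt}}) : Prop :=
  sigma != fset0 /\
  (forall At, At \in sigma -> At `<=` A /\ #|` At| = k) /\
  exists b : pt, forall At, At \in sigma -> Vor A At b.

Definition Del_inf_dim_le (A : {fset pt}) (k n : nat) : Prop :=
  forall sigma, Del_inf A k sigma -> (#|` sigma| - 1 <= n)%N.

Definition general_position (A : {fset pt}) : Prop :=
  (forall S : {fset pt}, S `<=` A -> #|` S| = d.+1 ->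
     ~ exists (u : pt) (beta : R), u != 0 /\ forall p, p \in S -> dotp u p = beta) /\
  (forall S : {fset pt}, S `<=` A -> #|` S| = d.+2 ->
     ~ exists (c : pt) (rho : R), forall p, p \in S -> enorm (p - c) = rho).
End Defs.

(* Main.v *)
Require Import Defs.
From HB Require Import structures.
From mathcomp Require Import all_boot all_order all_algebra.
From mathcomp Require Import finmap.
From mathcomp Require Import reals.
From mathcomp Require Import zify.
Import Order.TTheory GRing.Theory Num.Theory.
Local Open Scope ring_scope.
Local Open Scope fset_scope.
Lemma bin_up n j : (j < n./2)%N -> ('C(n, j) <= 'C(n, j.+1))%N.
Proof.
move=> hj.
have h2 := odd_double_half n. rewrite -addnn in h2.
have hb : (odd n <= 1)%N by case: (odd n).
have e := mul_bin_left n j.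
have hle : (j.+1 <= n - j)%N by lia.
rewrite -(@leq_pmul2l j.+1) // e.
by rewrite leq_mul2r hle orbT.
Qed.

Lemma bin_mid_aux n i j : (j + i = n./2)%N -> ('C(n, j) <= 'C(n, n./2))%N.
Proof.
elim: i j => [|i IH] j hji; first by rewrite addn0 in hji; rewrite hji.
apply: leq_trans (IH j.+1 _); last by rewrite addSnnS.
apply: bin_up; lia.
Qed.

Lemma bin_mid n j : ('C(n, j) <= 'C(n, n./2))%N.
Proof.
have h2 := odd_double_half n. rewrite -addnn in h2.
have hb : (odd n <= 1)%N by case: (odd n).
case: (leqP j n./2) => hj.
  by apply: (@bin_mid_aux n (n./2 - j)); lia.
case: (leqP j n) => hjn; last by rewrite bin_small.
rewrite -bin_sub //; apply: (@bin_mid_aux n (n./2 - (n - j))); lia.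
Qed.

Lemma bin_bound n N j : (n <= N)%N -> ('C(n, j) <= 'C(N, N./2))%N.
Proof. by move=> h; apply: leq_trans (leq_bin2l _ h) (bin_mid _ _). Qed.
Section S.
Variables (R : realType) (d : nat).
Notation pt := 'rV[R]_d.

Lemma enormN (x : pt) : enorm (- x) = enorm x.
Proof. by rewrite /enorm; congr Num.sqrt; apply: eq_bigr => i _; rewrite mxE sqrrN. Qed.

Lemma enormB (x y : pt) : enorm (x - y) = enorm (y - x).
Proof. by rewrite -enormN opprB. Qed.

Variables (A : {fset pt}) (k : nat) (sigma : {fset {fset pt}}) (b : pt).
Hypothesis hsz : forall At : {fset pt}, At \in sigma -> At `<=` A /\ #|` At| = k.
Hypothesis hvor : forall At : {fset pt}, At \in sigma -> Vor A At b.

Let f (x : pt) := enorm (b - x).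

Definition Iset := [fset x in A | all (fun At : {fset pt} => x \in At) (sigma : seq {fset pt})].
Definition Dset := [fset x in A | has (fun At : {fset pt} => x \in At) (sigma : seq {fset pt}) && ~~ all (fun At : {fset pt} => x \in At) (sigma : seq {fset pt})].

Lemma other_elt (At1 At4 : {fset pt}) (y : pt) : At1 \in sigma -> At4 \in sigma -> y \in At1 -> y \notin At4 ->
  exists z, z \in At4 /\ z \notin At1.
Proof.
move=> h1 h4 y1 y4.
have [s1 c1] := hsz _ h1; have [s4 c4] := hsz _ h4.
have : (0 < #|` At4 `\` At1|)%N.
  rewrite cardfsD c4 fsetIC -c1 -cardfsD cardfs_gt0; apply/fset0Pn; exists y.
  by rewrite inE y1 y4.
rewrite cardfs_gt0 => /fset0Pn [z]; rewrite inE => /andP [zn z4].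
by exists z.
Qed.

Lemma D_le (x y : pt) : x \in Dset -> y \in Dset -> f x <= f y.
Proof.
rewrite !inE /= => /and3P [xA hx ax].
have [At1 h1 x1] := hasP hx.
have [At2 h2 x2] := allPn ax.
move=> /and3P [yA hy ay].
have [At3 h3 y3] := hasP hy.
have [At4 h4 y4] := allPn ay.
case yin : (y \in At1).
  have [z [z4 z1]] := other_elt _ _ _ h1 h4 yin y4.
  have zA : z \in A by have [s _] := hsz _ h4; apply: (fsubsetP s).
  apply: le_trans (hvor _ h1 _ _ x1 zA z1) _.
  exact: hvor _ h4 _ _ z4 yA y4.
by apply: hvor _ h1 _ _ x1 yA _; rewrite yin.
Qed.

Lemma D_sub : Dset `<=` A.
Proof. by apply/fsubsetP => x; rewrite inE => /andP []. Qed.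

Lemma D_card
  (gp2 : forall S : {fset pt}, S `<=` A -> #|` S| = d.+2 ->
     ~ exists (c : pt) (rho : R), forall p, p \in S -> enorm (p - c) = rho) :
  (#|` Dset| <= d.+1)%N.
Proof.
rewrite leqNgt; apply/negP => hD.
pose s := take d.+2 (Dset : seq pt).
have us : uniq s := take_uniq _ (fset_uniq _).
have ss : size s = d.+2 by rewrite size_takel.
have sD : forall x, x \in s -> x \in Dset by move=> x /mem_take.
apply: (gp2 [fset x in s]).
- apply/fsubsetP => x; rewrite inE => /sD; exact: (fsubsetP D_sub).
- by rewrite card_fseq undup_id.
exists b, (f (nth b s 0)) => p; rewrite inE => ps.
have n0 : nth b s 0 \in Dset by apply: sD; rewrite mem_nth // ss.
rewrite enormB; apply/le_anti; rewrite !D_le //; exact: sD.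
Qed.

Lemma I_sub (At : {fset pt}) : At \in sigma -> Iset `<=` At.
Proof. by move=> h; apply/fsubsetP => x; rewrite inE => /andP [_ /allP]; apply. Qed.

Lemma DI_sub (At : {fset pt}) : At \in sigma -> At `\` Iset `<=` Dset.
Proof.
move=> h; have [sA _] := hsz _ h.
apply/fsubsetP => x; rewrite !inE => /andP [xI xAt].
have xA : x \in A by apply: (fsubsetP sA).
have xA' : x \in mem_fin (fset_finpred A) := xA.
move: xI; rewrite xA' /= => xI; rewrite xI andbT.
by apply/hasP; exists At.
Qed.

Lemma count_bound : (#|` sigma| <= 'C(#|` Dset|, k - #|` Iset|))%N.
Proof.
pose h (At : {fset pt}) : {set A} := fsub A (At `\` Iset).
pose X := [set S : {set A} | S \subset fsub A Dset & #|S| == (k - #|` Iset|)%N].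
have cX : #|X| = 'C(#|` Dset|, k - #|` Iset|).
  by rewrite cards_draws card_fsub // D_sub.
rewrite -cX cardE -(size_map h).
have subA : forall At : {fset pt}, At \in sigma -> At `\` Iset `<=` A.
  by move=> At hA; apply: fsubset_trans (DI_sub _ hA) D_sub.
apply: uniq_leq_size.
  rewrite map_inj_in_uniq ?fset_uniq //.
  move=> At1 At2 h1 h2 e.
  have e' : At1 `\` Iset = At2 `\` Iset.
    by apply: (fsub_inj (B := A)); rewrite ?inE ?subA.
  apply/fsetP => x.
  case xI : (x \in Iset).
    by rewrite (fsubsetP (I_sub _ h1)) // (fsubsetP (I_sub _ h2)).
  by have := congr1 (fun S => x \in S) e'; rewrite /= !in_fsetD xI.
move=> S /mapP [At hAt ->]; rewrite mem_enum inE.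
rewrite subset_fsubE ?subA ?D_sub ?DI_sub //=.
have [_ c] := hsz _ hAt.
by rewrite card_fsub ?subA // cardfsDS ?I_sub // c.
Qed.
End S.

Theorem lemma13 (R : realType) (d : nat) (A : {fset 'rV[R]_d}) :
  general_position A ->
  forall k : nat, Del_inf_dim_le A k 'C(d.+1, (d.+1)./2).
Proof.
move=> [_ gp2] k sigma [ne [hsz [b hb]]].

apply: leq_trans (leq_subr 1 _) _.
have cb := @count_bound R d A k sigma hsz.
apply: leq_trans cb _.
apply: bin_bound; exact: (@D_card R d A k sigma b hsz hb gp2).
Qed.
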